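(* Let $H$ be a Hilbert space and $W(\cdot)$ denote numerical range. (i) For $T,S\in\mathcal{L}(H)$, $\mathfrak{d}(\overline{W(T)},\overline{W(S)})\le\|T-S\|$. (ii) If $H_1\subset H_2\subset\cdots\subset H$ are nonzero closed subspaces with $\overline{\bigcup_nH_n}=H$, then for every $T\in\mathcal{L}(H)$, $\overline{W(T)}=\overline{\bigcup_nW(P_{H_n}T|_{H_n})}$; in particular $\mathfrak{d}(\overline{W(P_{H_n}T|_{H_n})},\overline{W(T)})\to0$. (iii) If $T\in\mathcal{L}(H)$ and $P,Q$ are nonzero orthogonal projections on $H$ with $\|P-Q\|<1$, then \[ \mathfrak{d}\big(\overline{W(PTP|_{PH})},\overline{W(QTQ|_{QH})}\big)\le\|T\|\,\|P-Q\|\Big[1+\frac{2}{(1-\|P-Q\|)^2}\Big]. \] In particular, if $P_n,P$ are nonzero orthogonal projections with $\|P_n-P\|\to0$, then $\mathfrak{d}(\overline{W(P_nTP_n|_{P_nH})},\overline{W(PTP|_{PH})})\to0$.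
   Context: The numerical range of $T\in\mathcal{L}(H)$ is $W(T)=\{\langle Tx,x\rangle:\|x\|=1\}$. $\mathfrak{d}$ denotes the Hausdorff distance between nonempty compact subsets of $\mathbb{C}$. *)

(* Defs.v *)
From Stdlib Require Import Reals Lra Classical ClassicalDescription.
Open Scope R_scope.

Definition C : Type := (R * R)%type.
Definition RtoC (r : R) : C := (r, 0).
Definition C0 : C := (0, 0).
Definition C1 : C := (1, 0).
Definition Cre (z : C) : R := fst z.
Definition Cim (z : C) : R := snd z.
Definition Cadd (z w : C) : C := (fst z + fst w, snd z + snd w).
Definition Copp (z : C) : C := (- fst z, - snd z).
Definition Csub (z w : C) : C := Cadd z (Copp w).
Definition Cmul (z w : C) : C :=
  (fst z * fst w - snd z * snd w, fst z * snd w + snd z * fst w).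
Definition Cconj (z : C) : C := (fst z, - snd z).
Definition Cmod (z : C) : R := sqrt (fst z ^ 2 + snd z ^ 2).

Record Hilbert := {
  hcar :> Type;
  vzero : hcar;
  vadd : hcar -> hcar -> hcar;
  vopp : hcar -> hcar;
  vscal : C -> hcar -> hcar;
  inner : hcar -> hcar -> C;
  vadd_assoc : forall x y z, vadd x (vadd y z) = vadd (vadd x y) z;
  vadd_comm : forall x y, vadd x y = vadd y x;
  vadd_0 : forall x, vadd x vzero = x;
  vadd_opp : forall x, vadd x (vopp x) = vzero;
  vscal_1 : forall x, vscal C1 x = x;
  vscal_assoc : forall a b x, vscal a (vscal b x) = vscal (Cmul a b) x;
  vscal_addC : forall a b x, vscal (Cadd a b) x = vadd (vscal a x) (vscal b x);
  vscal_addV : forall a x y, vscal a (vadd x y) = vadd (vscal a x) (vscal a y);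
  inner_add_l : forall x y z, inner (vadd x y) z = Cadd (inner x z) (inner y z);
  inner_scal_l : forall a x y, inner (vscal a x) y = Cmul a (inner x y);
  inner_sym : forall x y, inner y x = Cconj (inner x y);
  inner_pos : forall x, 0 <= Cre (inner x x);
  inner_def : forall x, inner x x = C0 -> x = vzero;
  hcomplete : forall u : nat -> hcar,
    (forall eps, eps > 0 -> exists N, forall m n, (m >= N)%nat -> (n >= N)%nat ->
       sqrt (Cre (inner (vadd (u m) (vopp (u n))) (vadd (u m) (vopp (u n))))) < eps) ->
    exists l, forall eps, eps > 0 -> exists N, forall n, (n >= N)%nat ->
       sqrt (Cre (inner (vadd (u n) (vopp l)) (vadd (u n) (vopp l)))) < eps
}.

Arguments vzero {h}.
Arguments vadd {h}.
Arguments vopp {h}.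
Arguments vscal {h}.
Arguments inner {h}.

Definition vsub {H : Hilbert} (x y : H) : H := vadd x (vopp y).
Definition vnorm {H : Hilbert} (x : H) : R := sqrt (Cre (inner x x)).

Definition Rsup (E : R -> Prop) : R :=
  match excluded_middle_informative (bound E /\ exists x, E x) with
  | left h => proj1_sig (completeness E (proj1 h) (proj2 h))
  | right _ => 0
  end.
Definition Rinf (E : R -> Prop) : R := - Rsup (fun r => E (- r)).

Definition linear_op {H : Hilbert} (T : H -> H) : Prop :=
  (forall x y, T (vadd x y) = vadd (T x) (T y)) /\
  (forall a x, T (vscal a x) = vscal a (T x)).

Definition bounded_op {H : Hilbert} (T : H -> H) : Prop :=
  linear_op T /\ exists c, forall x, vnorm (T x) <= c * vnorm x.

Definition op_sub {H : Hilbert} (T S : H -> H) : H -> H := fun x => vsub (T x) (S x).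

Definition opnorm {H : Hilbert} (T : H -> H) : R :=
  Rsup (fun r => exists x : H, vnorm x <= 1 /\ r = vnorm (T x)).

Definition orth_proj {H : Hilbert} (P : H -> H) : Prop :=
  bounded_op P /\ (forall x, P (P x) = P x) /\
  (forall x y, inner (P x) y = inner x (P y)).

Definition nonzero_op {H : Hilbert} (P : H -> H) : Prop := exists x, P x <> vzero.

Definition closed_subspace {H : Hilbert} (M : H -> Prop) : Prop :=
  M vzero /\ (forall x y, M x -> M y -> M (vadd x y)) /\
  (forall a x, M x -> M (vscal a x)) /\
  (forall (u : nat -> H) l, (forall n, M (u n)) ->
     (forall eps, eps > 0 -> exists N, forall n, (n >= N)%nat -> vnorm (vsub (u n) l) < eps) ->
     M l).

Definition nonzero_subspace {H : Hilbert} (M : H -> Prop) : Prop :=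
  exists x, M x /\ x <> vzero.

Definition orth_proj_onto {H : Hilbert} (M : H -> Prop) (P : H -> H) : Prop :=
  orth_proj P /\ (forall y, M y <-> exists x, y = P x).

Definition numrange {H : Hilbert} (T : H -> H) : C -> Prop :=
  fun z => exists x : H, vnorm x = 1 /\ z = inner (T x) x.

(* numerical range of an operator A on the subspace M (A M ⊆ M), viewed as an
   operator on the Hilbert space M with the inherited inner product:
   W(A|_M) = { <Ax,x> : x ∈ M, ||x|| = 1 } *)
Definition numrange_on {H : Hilbert} (M : H -> Prop) (A : H -> H) : C -> Prop :=
  fun z => exists x : H, M x /\ vnorm x = 1 /\ z = inner (A x) x.

Definition range {H : Hilbert} (P : H -> H) : H -> Prop := fun y => exists x, y = P x.

Definition closure (A : C -> Prop) : C -> Prop :=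
  fun z => forall eps, eps > 0 -> exists a, A a /\ Cmod (Csub z a) < eps.

Definition dist_pt_set (z : C) (B : C -> Prop) : R :=
  Rinf (fun r => exists b, B b /\ r = Cmod (Csub z b)).

Definition hausdorff (A B : C -> Prop) : R :=
  Rmax (Rsup (fun r => exists a, A a /\ r = dist_pt_set a B))
       (Rsup (fun r => exists b, B b /\ r = dist_pt_set b A)).

(* Main.v *)
Require Import Defs.
From Stdlib Require Import Reals Lra Psatz Classical ClassicalDescription Arith Lia.
Open Scope R_scope.

Lemma sq_le (x y : R) : 0 <= y -> x * x <= y * y -> x <= y.
Proof. intros. nra. Qed.

Lemma Rsup_le (E : R -> Prop) K : 0 <= K -> (forall r, E r -> r <= K) -> Rsup E <= K.
Proof.
  intros HK HE. unfold Rsup. destruct excluded_middle_informative as [h|h]; [|lra].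
  destruct (completeness E _ _) as [m [Hm1 Hm2]]. simpl. apply Hm2. intros r Hr. now apply HE.
Qed.

Lemma Rsup_ge (E : R -> Prop) r : E r -> (exists M, forall x, E x -> x <= M) -> r <= Rsup E.
Proof.
  intros Hr [M HM]. unfold Rsup. destruct excluded_middle_informative as [h|h].
  - destruct (completeness E _ _) as [m [Hm1 Hm2]]. simpl. now apply Hm1.
  - exfalso. apply h. split; [exists M; intros x Hx; now apply HM | now exists r].
Qed.

Lemma Rsup_nonneg (E : R -> Prop) : (forall x, E x -> 0 <= x) -> 0 <= Rsup E.
Proof.
  intros HE. unfold Rsup. destruct excluded_middle_informative as [h|h]; [|lra].
  destruct (completeness E _ _) as [m [Hm1 Hm2]]. simpl.
  destruct h as [_ [x Hx]]. apply Rle_trans with x; [now apply HE| now apply Hm1].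
Qed.

Lemma Rinf_le (E : R -> Prop) r : E r -> (forall x, E x -> 0 <= x) -> Rinf E <= r.
Proof.
  intros Hr HE. unfold Rinf.
  assert (- r <= Rsup (fun r0 => E (- r0))).
  { apply Rsup_ge. now rewrite Ropp_involutive. exists 0. intros x Hx. apply HE in Hx. lra. }
  lra.
Qed.

Lemma Rinf_nonneg (E : R -> Prop) : (forall x, E x -> 0 <= x) -> 0 <= Rinf E.
Proof.
  intros HE. unfold Rinf.
  assert (Rsup (fun r0 => E (- r0)) <= 0).
  { apply Rsup_le; [lra|]. intros x Hx. apply HE in Hx. lra. }
  lra.
Qed.

Lemma Cmod_nonneg z : 0 <= Cmod z.
Proof. apply sqrt_pos. Qed.

Lemma Cmod_sq z : Cmod z * Cmod z = fst z ^ 2 + snd z ^ 2.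
Proof. unfold Cmod. apply sqrt_sqrt. nra. Qed.

Lemma Cmod_le_iff z r : 0 <= r -> fst z ^ 2 + snd z ^ 2 <= r * r -> Cmod z <= r.
Proof. intros. apply sq_le; auto. rewrite Cmod_sq. lra. Qed.

Lemma Cmod_triangle a b : Cmod (Cadd a b) <= Cmod a + Cmod b.
Proof.
  destruct a as [a1 a2], b as [b1 b2]. unfold Cadd; simpl.
  pose proof (Cmod_sq (a1,a2)) as Ha. pose proof (Cmod_sq (b1,b2)) as Hb.
  pose proof (Cmod_nonneg (a1,a2)). pose proof (Cmod_nonneg (b1,b2)).
  simpl in *. set (sa := Cmod (a1,a2)) in *. set (sb := Cmod (b1,b2)) in *.
  apply Cmod_le_iff. lra. simpl.
  assert (a1*b1 + a2*b2 <= sa*sb).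
  { destruct (Rle_dec (a1*b1+a2*b2) 0). nra. apply sq_le. nra.
    replace (sa*sb*(sa*sb)) with ((sa*sa)*(sb*sb)) by ring. rewrite Ha, Hb. pose proof (pow2_ge_0 (a1*b2 - a2*b1)). nra. }
  nra.
Qed.

Lemma Cmod_sub_sym a b : Cmod (Csub a b) = Cmod (Csub b a).
Proof. destruct a, b. unfold Cmod, Csub, Cadd, Copp; simpl. f_equal. ring. Qed.

Lemma Cmod_sub_tri a b c : Cmod (Csub a c) <= Cmod (Csub a b) + Cmod (Csub b c).
Proof.
  replace (Csub a c) with (Cadd (Csub a b) (Csub b c)). apply Cmod_triangle.
  destruct a, b, c. unfold Csub, Cadd, Copp; simpl. f_equal; ring.
Qed.

Lemma Cmod_self z : Cmod (Csub z z) = 0.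
Proof. destruct z. unfold Cmod, Csub, Cadd, Copp; simpl.
  rewrite <- sqrt_0. f_equal. ring. Qed.

Lemma Cmod_re z : Rabs (fst z) <= Cmod z.
Proof. destruct z as [a b]. pose proof (Cmod_sq (a,b)). pose proof (Cmod_nonneg (a,b)).
  simpl in *. apply Rabs_le. split; nra. Qed.
Lemma Cmod_im z : Rabs (snd z) <= Cmod z.
Proof. destruct z as [a b]. pose proof (Cmod_sq (a,b)). pose proof (Cmod_nonneg (a,b)).
  simpl in *. apply Rabs_le. split; nra. Qed.

Lemma Cmod_le_comp z : Cmod z <= Rabs (fst z) + Rabs (snd z).
Proof. destruct z as [a b]. apply Cmod_le_iff; simpl. pose proof (Rabs_pos a); pose proof (Rabs_pos b); lra.
  simpl. pose proof (Rabs_pos a); pose proof (Rabs_pos b).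
  pose proof (Rsqr_abs a); pose proof (Rsqr_abs b). unfold Rsqr in *. nra. Qed.

Lemma Cmod_mul a b : Cmod (Cmul a b) = Cmod a * Cmod b.
Proof. destruct a as [a1 a2], b as [b1 b2]. unfold Cmod, Cmul; simpl.
  rewrite <- sqrt_mult by nra. f_equal. ring. Qed.

Lemma Cmod_real r : Cmod (r, 0) = Rabs r.
Proof. unfold Cmod; simpl. rewrite <- sqrt_Rsqr_abs. f_equal. unfold Rsqr. ring. Qed.

Arguments vadd_assoc {h}. Arguments vadd_comm {h}. Arguments vadd_0 {h}. Arguments vadd_opp {h}.
Arguments vscal_1 {h}. Arguments vscal_assoc {h}. Arguments vscal_addC {h}. Arguments vscal_addV {h}.
Arguments inner_add_l {h}. Arguments inner_scal_l {h}. Arguments inner_sym {h}. Arguments inner_pos {h}.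
Arguments inner_def {h}.

Section V.
Context {H : Hilbert}.
Implicit Types x y z : H.

Lemma vadd_0_l x : vadd vzero x = x.
Proof. rewrite vadd_comm. apply vadd_0. Qed.

Lemma vadd_cancel x y z : vadd x y = vadd x z -> y = z.
Proof.
  intros E. rewrite <- (vadd_0_l y), <- (vadd_0_l z), <- (vadd_opp x), (vadd_comm x).
  rewrite <- !vadd_assoc, E. reflexivity.
Qed.

Lemma vscal_0 x : vscal C0 x = vzero.
Proof.
  apply (vadd_cancel (vscal C0 x)). rewrite vadd_0, <- vscal_addC.
  f_equal. unfold Cadd, C0; simpl; f_equal; ring.
Qed.

Lemma vopp_scal x : vopp x = vscal (-1, 0) x.
Proof.
  apply (vadd_cancel x). rewrite vadd_opp. rewrite <- (vscal_1 x) at 1.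
  rewrite <- vscal_addC. rewrite <- (vscal_0 x). f_equal. unfold Cadd, C1, C0; simpl; f_equal; ring.
Qed.

Lemma inner_0_l y : inner vzero y = C0.
Proof. rewrite <- (vscal_0 vzero), inner_scal_l. unfold Cmul, C0; simpl; f_equal; ring. Qed.

Lemma Cconj_add a b : Cconj (Cadd a b) = Cadd (Cconj a) (Cconj b).
Proof. destruct a, b; unfold Cconj, Cadd; simpl; f_equal; ring. Qed.

Lemma inner_add_r x y z : inner z (vadd x y) = Cadd (inner z x) (inner z y).
Proof. rewrite inner_sym, inner_add_l, Cconj_add, <- !inner_sym. reflexivity. Qed.

Lemma inner_scal_r a x y : inner x (vscal a y) = Cmul (Cconj a) (inner x y).
Proof. rewrite inner_sym, inner_scal_l, (inner_sym y x).
  destruct a, (inner x y); unfold Cconj, Cmul; simpl; f_equal; ring. Qed.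

Lemma inner_0_r y : inner y vzero = C0.
Proof. rewrite inner_sym, inner_0_l. unfold Cconj, C0; simpl; f_equal; ring. Qed.

Lemma inner_opp_l x y : inner (vopp x) y = Copp (inner x y).
Proof. rewrite vopp_scal, inner_scal_l. destruct (inner x y); unfold Cmul, Copp; simpl; f_equal; ring. Qed.

Lemma inner_opp_r x y : inner y (vopp x) = Copp (inner y x).
Proof. rewrite vopp_scal, inner_scal_r. destruct (inner y x); unfold Cmul, Copp, Cconj; simpl; f_equal; ring. Qed.

Lemma inner_sub_l x y z : inner (vsub x y) z = Csub (inner x z) (inner y z).
Proof. unfold vsub, Csub. now rewrite inner_add_l, inner_opp_l. Qed.

Lemma inner_sub_r x y z : inner z (vsub x y) = Csub (inner z x) (inner z y).
Proof. unfold vsub, Csub. now rewrite inner_add_r, inner_opp_r. Qed.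

Lemma inner_im x : snd (inner x x) = 0.
Proof. pose proof (inner_sym x x). destruct (inner x x) as [a b]. unfold Cconj in H0.
  simpl in *. injection H0. lra. Qed.

Lemma inner_re_nonneg x : 0 <= fst (inner x x).
Proof. apply inner_pos. Qed.

Lemma vnorm_nonneg x : 0 <= vnorm x.
Proof. apply sqrt_pos. Qed.

Lemma vnorm_sq x : vnorm x * vnorm x = fst (inner x x).
Proof. apply sqrt_sqrt, inner_pos. Qed.

Lemma vnorm_le_iff x r : 0 <= r -> fst (inner x x) <= r * r -> vnorm x <= r.
Proof. intros. apply sq_le; auto. rewrite vnorm_sq. lra. Qed.

Lemma vnorm_zero x : vnorm x = 0 -> x = vzero.
Proof. intros E. apply inner_def. pose proof (vnorm_sq x). rewrite E in H0.
  pose proof (inner_im x). destruct (inner x x); simpl in *. unfold C0. f_equal; lra. Qed.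

Lemma vnorm_pos x : x <> vzero -> 0 < vnorm x.
Proof. intros. destruct (vnorm_nonneg x); auto. exfalso. apply H0, vnorm_zero. auto. Qed.

Lemma vnorm_0 : vnorm (@vzero H) = 0.
Proof. unfold vnorm. rewrite inner_0_l. unfold C0; simpl. apply sqrt_0. Qed.

Lemma inner_expand x y s :
  fst (inner (vadd x (vscal s y)) (vadd x (vscal s y))) =
  fst (inner x x) + 2 * (fst s * fst (inner x y) + snd s * snd (inner x y)) +
  (fst s ^ 2 + snd s ^ 2) * fst (inner y y).
Proof.
  rewrite !inner_add_l, !inner_add_r, !inner_scal_l, !inner_scal_r, (inner_sym y x).
  pose proof (inner_im y). destruct (inner y y) as [b b']. simpl in H0. subst b'.
  destruct s as [u v], (inner x y) as [p q], (inner x x) as [A A'].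
  unfold Cadd, Cmul, Cconj; simpl. ring.
Qed.

Lemma cauchy_schwarz x y : Cmod (inner x y) <= vnorm x * vnorm y.
Proof.
  destruct (Req_dec (fst (inner y y)) 0) as [Hy|Hy].
  - assert (y = vzero).
    { apply inner_def. pose proof (inner_im y). destruct (inner y y); simpl in *; subst; reflexivity. }
    subst. rewrite inner_0_r, vnorm_0. unfold Cmod, C0; simpl.
    rewrite Rmult_0_r. replace (0 * (0 * 1) + 0 * (0 * 1)) with 0 by ring. rewrite sqrt_0. lra.
  - pose proof (inner_re_nonneg y). assert (Hb : 0 < fst (inner y y)) by lra.
    set (b := fst (inner y y)) in *.
    set (p := fst (inner x y)). set (q := snd (inner x y)).
    pose proof (inner_expand x y (-p/b, -q/b)) as E.
    pose proof (inner_re_nonneg (vadd x (vscal (- p / b, - q / b) y))) as P.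
    rewrite E in P. cbn [fst snd] in P. fold p q b in P.
    assert (p^2 + q^2 <= fst (inner x x) * b).
    { replace (fst (inner x x) + 2 * (- p / b * p + - q / b * q) + ((- p / b) ^ 2 + (- q / b) ^ 2) * b)
        with (fst (inner x x) - (p^2+q^2)/b) in P by (field; lra).
      apply Rmult_le_reg_r with (/b). apply Rinv_0_lt_compat; lra.
      replace (fst (inner x x) * b * / b) with (fst (inner x x)) by (field; lra).
      unfold Rdiv in P. lra. }
    apply Cmod_le_iff. pose proof (vnorm_nonneg x); pose proof (vnorm_nonneg y); nra.
    replace (vnorm x * vnorm y * (vnorm x * vnorm y)) with ((vnorm x * vnorm x) * (vnorm y * vnorm y)) by ring.
    rewrite !vnorm_sq. fold b. exact H1.
Qed.

Lemma Cre_le_Cmod (w : Defs.C) : fst w <= Cmod w.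
Proof. pose proof (Cmod_re w). pose proof (Rle_abs (fst w)). lra. Qed.

Lemma vnorm_triangle x y : vnorm (vadd x y) <= vnorm x + vnorm y.
Proof.
  apply vnorm_le_iff. pose proof (vnorm_nonneg x); pose proof (vnorm_nonneg y); lra.
  rewrite <- (vscal_1 y), inner_expand. rewrite vscal_1. unfold C1; simpl.
  pose proof (cauchy_schwarz x y). pose proof (Cre_le_Cmod (inner x y)).
  rewrite <- !vnorm_sq. pose proof (vnorm_nonneg x); pose proof (vnorm_nonneg y). nra.
Qed.

Lemma vnorm_scal s x : vnorm (vscal s x) = Cmod s * vnorm x.
Proof.
  unfold vnorm, Cmod. rewrite <- sqrt_mult. f_equal.
  rewrite inner_scal_l, inner_scal_r. pose proof (inner_im x).
  destruct s, (inner x x); simpl in *; subst. ring.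
  nra. apply inner_pos.
Qed.

Lemma vnorm_opp x : vnorm (vopp x) = vnorm x.
Proof. rewrite vopp_scal, vnorm_scal, Cmod_real. rewrite Rabs_left by lra. ring. Qed.

Lemma vsub_add x y z : vadd (vsub x y) (vsub y z) = vsub x z.
Proof. unfold vsub. rewrite vadd_assoc. f_equal. rewrite <- vadd_assoc, (vadd_comm (vopp y)), vadd_opp, vadd_0. reflexivity. Qed.

Lemma vnorm_sub_tri x y z : vnorm (vsub x z) <= vnorm (vsub x y) + vnorm (vsub y z).
Proof. rewrite <- (vsub_add x y z). apply vnorm_triangle. Qed.

Lemma vsub_opp x y : vsub y x = vopp (vsub x y).
Proof. apply (vadd_cancel (vsub x y)). rewrite vadd_opp, vsub_add. unfold vsub. apply vadd_opp. Qed.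

Lemma vnorm_sub_sym x y : vnorm (vsub x y) = vnorm (vsub y x).
Proof. rewrite (vsub_opp x y), vnorm_opp. reflexivity. Qed.

Lemma vsub_self x : vsub x x = vzero.
Proof. apply vadd_opp. Qed.

Lemma vsub_0 x : vsub x vzero = x.
Proof. unfold vsub. assert (E : vopp (@vzero H) = vzero).
  { pose proof (vadd_opp (@vzero H)). rewrite vadd_0_l in H0. exact H0. }
  rewrite E. apply vadd_0. Qed.

Lemma vscal_sub a x y : vscal a (vsub x y) = vsub (vscal a x) (vscal a y).
Proof. unfold vsub. rewrite vscal_addV, !vopp_scal, !vscal_assoc. f_equal. f_equal.
  destruct a; unfold Cmul; simpl; f_equal; ring. Qed.

Lemma vscal_sub_l a b x : vsub (vscal a x) (vscal b x) = vscal (Csub a b) x.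
Proof. unfold vsub, Csub. rewrite vscal_addC, vopp_scal, vscal_assoc. f_equal. f_equal.
  destruct b; unfold Cmul, Copp; simpl; f_equal; ring. Qed.

End V.

Section O.
Context {H : Hilbert}.
Implicit Types x y : H.

Lemma lin_opp (T : H -> H) x : linear_op T -> T (vopp x) = vopp (T x).
Proof. intros [_ Hs]. now rewrite !vopp_scal, Hs. Qed.

Lemma lin_sub (T : H -> H) x y : linear_op T -> T (vsub x y) = vsub (T x) (T y).
Proof. intros HT. unfold vsub. rewrite (proj1 HT), lin_opp; auto. Qed.

Lemma bounded_nonneg (U : H -> H) : (exists c, forall x, vnorm (U x) <= c * vnorm x) ->
  exists K, 0 <= K /\ forall x, vnorm (U x) <= K * vnorm x.
Proof. intros [c Hc]. exists (Rmax c 0). split. apply Rmax_r.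
  intros x. pose proof (Hc x). pose proof (vnorm_nonneg x). pose proof (Rmax_l c 0). nra. Qed.

Lemma opnorm_ge (U : H -> H) x : (exists c, forall x, vnorm (U x) <= c * vnorm x) ->
  vnorm x <= 1 -> vnorm (U x) <= opnorm U.
Proof.
  intros Hc Hx. apply bounded_nonneg in Hc. destruct Hc as [K [HK Hc]].
  unfold opnorm. apply Rsup_ge. exists x; split; auto.
  exists K. intros r [z [Hz ->]]. pose proof (Hc z). pose proof (vnorm_nonneg z). nra.
Qed.

Lemma opnorm_nonneg (U : H -> H) : 0 <= opnorm U.
Proof. unfold opnorm. apply Rsup_nonneg. intros r [z [_ ->]]. apply vnorm_nonneg. Qed.

Lemma unit_scal x : x <> vzero -> vnorm (vscal (/ vnorm x, 0) x) = 1.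
Proof. intros Hx. pose proof (vnorm_pos x Hx). rewrite vnorm_scal, Cmod_real.
  rewrite Rabs_right. field. lra. left. apply Rinv_0_lt_compat. lra. Qed.

Lemma opnorm_bound (U : H -> H) x : bounded_op U -> vnorm (U x) <= opnorm U * vnorm x.
Proof.
  intros [Hl Hc]. destruct (classic (x = vzero)) as [E|E].
  - subst. apply bounded_nonneg in Hc. destruct Hc as [K [HK Hc]].
    pose proof (Hc vzero). rewrite vnorm_0 in *. rewrite Rmult_0_r in *. lra.
  - pose proof (vnorm_pos x E). pose proof (opnorm_ge U _ Hc (Req_le _ _ (unit_scal x E))).
    rewrite (proj2 Hl), vnorm_scal, Cmod_real, Rabs_right in H1.
    2: left; apply Rinv_0_lt_compat; lra.
    apply Rmult_le_reg_l with (/ vnorm x). apply Rinv_0_lt_compat; lra.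
    replace (/ vnorm x * (opnorm U * vnorm x)) with (opnorm U) by (field; lra). lra.
Qed.

Lemma quad_diff (T : H -> H) K x y : linear_op T -> (forall w, vnorm (T w) <= K * vnorm w) ->
  Cmod (Csub (inner (T x) x) (inner (T y) y)) <= K * vnorm (vsub x y) * (vnorm x + vnorm y).
Proof.
  intros HT HK.
  replace (Csub (inner (T x) x) (inner (T y) y)) with
     (Cadd (inner (T (vsub x y)) x) (inner (T y) (vsub x y))).
  2:{ rewrite lin_sub by auto. rewrite inner_sub_l, inner_sub_r.
      destruct (inner (T x) x), (inner (T y) x), (inner (T y) y).
      unfold Csub, Cadd, Copp; simpl; f_equal; ring. }
  eapply Rle_trans. apply Cmod_triangle.
  pose proof (cauchy_schwarz (T (vsub x y)) x). pose proof (cauchy_schwarz (T y) (vsub x y)).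
  pose proof (HK (vsub x y)). pose proof (HK y).
  pose proof (vnorm_nonneg x); pose proof (vnorm_nonneg y); pose proof (vnorm_nonneg (vsub x y)).
  pose proof (vnorm_nonneg (T y)); pose proof (vnorm_nonneg (T (vsub x y))).
  nra.
Qed.

End O.

Lemma closure_incl (A : Defs.C -> Prop) a : A a -> closure A a.
Proof. intros Ha eps He. exists a. split; auto. rewrite Cmod_self. lra. Qed.

Lemma closure_mono (A B : Defs.C -> Prop) : (forall a, A a -> B a) -> forall z, closure A z -> closure B z.
Proof. intros HAB z Hz eps He. destruct (Hz eps He) as [a [Ha Hd]]. exists a; auto. Qed.

Lemma dist_nonneg z B : 0 <= dist_pt_set z B.
Proof. apply Rinf_nonneg. intros x [b [_ ->]]. apply Cmod_nonneg. Qed.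

Lemma hausdorff_nonneg A B : 0 <= hausdorff A B.
Proof. unfold hausdorff. eapply Rle_trans; [|apply Rmax_l].
  apply Rsup_nonneg. intros x [a [_ ->]]. apply dist_nonneg. Qed.

Lemma half_le (A B : Defs.C -> Prop) K : 0 <= K ->
  (forall a, A a -> exists b, B b /\ Cmod (Csub a b) <= K) ->
  Rsup (fun r => exists a, closure A a /\ r = dist_pt_set a (closure B)) <= K.
Proof.
  intros HK HAB. apply Rsup_le; auto. intros r [a [Ha ->]].
  apply Rnot_lt_le. intros Hlt.
  set (e := dist_pt_set a (closure B) - K) in *.
  assert (He : e > 0) by (unfold e; lra).
  destruct (Ha e He) as [a' [Ha' Hd]]. destruct (HAB a' Ha') as [b [Hb Hd2]].
  assert (dist_pt_set a (closure B) <= Cmod (Csub a b)).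
  { apply Rinf_le. exists b; split; auto. now apply closure_incl.
    intros x [b0 [_ ->]]. apply Cmod_nonneg. }
  pose proof (Cmod_sub_tri a a' b). unfold e in *. lra.
Qed.

Lemma haus_le (A B : Defs.C -> Prop) K : 0 <= K ->
  (forall a, A a -> exists b, B b /\ Cmod (Csub a b) <= K) ->
  (forall b, B b -> exists a, A a /\ Cmod (Csub b a) <= K) ->
  hausdorff (closure A) (closure B) <= K.
Proof. intros. unfold hausdorff. apply Rmax_lub; now apply half_le. Qed.

Section P.
Context {H : Hilbert}.
Implicit Types x y : H.

Lemma rev_tri x y : vnorm x <= vnorm (vsub x y) + vnorm y.
Proof. pose proof (vnorm_sub_tri x y vzero). now rewrite !vsub_0 in H0. Qed.

Lemma sub_bounded (U V : H -> H) : bounded_op U -> bounded_op V ->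
  exists c, forall x, vnorm (op_sub U V x) <= c * vnorm x.
Proof.
  intros [_ HU] [_ HV]. apply bounded_nonneg in HU as [a [Ha HU]].
  apply bounded_nonneg in HV as [b [Hb HV]]. exists (a + b). intros x.
  unfold op_sub, vsub. eapply Rle_trans. apply vnorm_triangle. rewrite vnorm_opp.
  pose proof (HU x); pose proof (HV x). lra.
Qed.

Lemma shrink_dist y : 0 < vnorm y -> vnorm (vsub y (vscal (/ vnorm y, 0) y)) = Rabs (vnorm y - 1).
Proof.
  intros Hs. set (s := vnorm y) in *.
  rewrite <- (vscal_1 y) at 1. rewrite vscal_sub_l, vnorm_scal.
  replace (Csub Defs.C1 (/ s, 0)) with ((s - 1) * / s, 0).
  2:{ unfold Csub, Cadd, Copp, Defs.C1; simpl. f_equal; field; lra. }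
  rewrite Cmod_real, Rabs_mult, (Rabs_right (/ s)). fold s. field. lra.
  left. apply Rinv_0_lt_compat. lra.
Qed.

Lemma vnorm_ne0 y : 0 < vnorm y -> y <> vzero.
Proof. intros Hp E. subst. rewrite vnorm_0 in Hp. lra. Qed.

Lemma part1 (T S : H -> H) : bounded_op T -> bounded_op S ->
  hausdorff (closure (numrange T)) (closure (numrange S)) <= opnorm (op_sub T S).
Proof.
  intros HT HS. pose proof (sub_bounded T S HT HS) as Hb.
  assert (key : forall x, vnorm x = 1 -> Cmod (Csub (inner (T x) x) (inner (S x) x)) <= opnorm (op_sub T S)).
  { intros x Hx. rewrite <- inner_sub_l. eapply Rle_trans. apply cauchy_schwarz.
    rewrite Hx, Rmult_1_r. apply (opnorm_ge (op_sub T S) x); auto. lra. }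
  apply haus_le. apply opnorm_nonneg.
  - intros a [x [Hx ->]]. exists (inner (S x) x). split. exists x; auto. now apply key.
  - intros b [x [Hx ->]]. exists (inner (T x) x). split. exists x; auto.
    rewrite Cmod_sub_sym. now apply key.
Qed.

Lemma proj_fix (P : H -> H) x : orth_proj P -> range P x -> P x = x.
Proof. intros [_ [Hi _]] [z ->]. apply Hi. Qed.

Lemma real_ineq d : 0 <= d < 1 -> 2 * (d + d * d) <= d * (1 + 2 / (1 - d) ^ 2).
Proof.
  intros Hd. assert (Hu : 0 < (1 - d) ^ 2) by (apply pow_lt; lra).
  set (t := 2 / (1 - d) ^ 2). assert (Ht : t * (1 - d) ^ 2 = 2) by (unfold t; field; lra).
  assert (1 + 2 * d <= t).
  { apply Rmult_le_reg_r with ((1-d)^2). auto. rewrite Ht. simpl. nra. }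
  nra.
Qed.

Lemma part3_core (T P Q : H -> H) d : bounded_op T -> orth_proj P -> orth_proj Q ->
  0 <= d < 1 -> (forall x, vnorm x <= 1 -> vnorm (vsub (P x) (Q x)) <= d) ->
  forall a, numrange_on (range P) (fun x => P (T (P x))) a ->
  exists b, numrange_on (range Q) (fun x => Q (T (Q x))) b /\
     Cmod (Csub a b) <= opnorm T * d * (1 + 2 / (1 - d) ^ 2).
Proof.
  intros HT HP HQ Hd Hpq a [x [Hrx [Hx ->]]].
  pose proof (proj_fix P x HP Hrx) as Px. rewrite Px.
  destruct HQ as [[HQl _] [HQi HQs]].
  destruct HP as [_ [_ HPs]].
  set (y := Q x). set (s := vnorm y).
  assert (Hxy : vnorm (vsub x y) <= d). { rewrite <- Px at 1. apply Hpq. lra. }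
  (* Pythagoras *)
  assert (Pyth : vnorm (vsub x y) * vnorm (vsub x y) = 1 - s * s).
  { rewrite !vnorm_sq. unfold s. rewrite vnorm_sq.
    assert (E1 : inner y y = inner x y). { unfold y. now rewrite HQs, HQi. }
    assert (E2 : inner y x = inner x y). { unfold y. now rewrite HQs. }
    rewrite inner_sub_l, !inner_sub_r, E1, E2.
    assert (fst (inner x x) = 1). { rewrite <- vnorm_sq, Hx. ring. }
    destruct (inner x x), (inner x y). unfold Csub, Cadd, Copp; simpl in *. lra. }
  pose proof (vnorm_nonneg (vsub x y)). pose proof (vnorm_nonneg y).
  fold s in H1.
  assert (Hs : 0 < s) by nra. assert (Hs1 : s <= 1) by nra.
  set (y' := vscal (/ s, 0) y).
  assert (Hy' : vnorm y' = 1) by (apply unit_scal, vnorm_ne0; auto).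
  assert (Qy' : Q y' = y'). { unfold y', y. rewrite (proj2 HQl), HQi. reflexivity. }
  exists (inner (Q (T (Q y'))) y'). split.
  - exists y'. split; [exists y'; auto|]. split; auto.
  - rewrite Qy', HQs, Qy', (HPs (T x) x), Px.
    pose proof (quad_diff T (opnorm T) x y' (proj1 HT) (fun w => opnorm_bound T w HT)) as Q1.
    rewrite Hx, Hy' in Q1.
    pose proof (vnorm_sub_tri x y y').
    pose proof (shrink_dist y Hs) as Sd. fold s y' in Sd. rewrite Rabs_left1 in Sd by lra.
    assert (1 - s <= d * d) by nra.
    pose proof (opnorm_nonneg T). pose proof (real_ineq d Hd).
    assert (vnorm (vsub x y') <= d + d * d) by lra.
    eapply Rle_trans. apply Q1. nra.
Qed.

Lemma part3 (T P Q : H -> H) : bounded_op T -> orth_proj P -> orth_proj Q ->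
  opnorm (op_sub P Q) < 1 ->
  hausdorff (closure (numrange_on (range P) (fun x => P (T (P x)))))
            (closure (numrange_on (range Q) (fun x => Q (T (Q x)))))
  <= opnorm T * opnorm (op_sub P Q) * (1 + 2 / (1 - opnorm (op_sub P Q)) ^ 2).
Proof.
  intros HT HP HQ Hd. set (d := opnorm (op_sub P Q)) in *.
  assert (Hd0 : 0 <= d) by apply opnorm_nonneg.
  assert (Hpq : forall x, vnorm x <= 1 -> vnorm (vsub (P x) (Q x)) <= d).
  { intros x Hx. apply (opnorm_ge (op_sub P Q) x); auto. apply sub_bounded; apply HP || apply HQ. }
  apply haus_le.
  - pose proof (opnorm_nonneg T). assert (0 < (1 - d) ^ 2) by (apply pow_lt; lra).
    apply Rmult_le_pos. nra. assert (0 <= 2 / (1 - d) ^ 2) by (apply Rlt_le, Rdiv_lt_0_compat; lra). lra.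
  - intros a Ha. apply (part3_core T P Q d); auto.
  - intros b Hb. apply (part3_core T Q P d); auto.
    intros x Hx. rewrite vnorm_sub_sym. auto.
Qed.

End P.

Lemma part3lim {H : Hilbert} (T P : H -> H) (Pn : nat -> H -> H) : bounded_op T ->
     orth_proj P -> (forall n, orth_proj (Pn n)) ->
     Un_cv (fun n => opnorm (op_sub (Pn n) P)) 0 ->
     Un_cv (fun n => hausdorff
              (closure (numrange_on (range (Pn n)) (fun x => Pn n (T (Pn n x)))))
              (closure (numrange_on (range P) (fun x => P (T (P x)))))) 0.
Proof.
  intros HT HP HPn Hcv eps He.
  set (K := opnorm T). assert (HK : 0 <= K) by apply opnorm_nonneg.
  set (r := Rmin (1/2) (eps / (9 * (K + 1)))).
  assert (Hr : 0 < r). { unfold r. apply Rmin_glb_lt. lra. apply Rdiv_lt_0_compat; lra. }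
  assert (Hr1 : r <= 1/2) by apply Rmin_l.
  assert (Hr2 : r <= eps / (9 * (K + 1))) by apply Rmin_r.
  clearbody r.
  destruct (Hcv r Hr) as [N HN]. exists N. intros n Hn.
  specialize (HN n Hn). unfold R_dist in *. rewrite Rminus_0_r in *.
  set (d := opnorm (op_sub (Pn n) P)) in *.
  assert (Hd0 : 0 <= d) by apply opnorm_nonneg. rewrite Rabs_right in HN by lra.
  assert (Hd1 : d <= 1/2) by lra.
  assert (Hd2 : d * (9 * (K + 1)) < eps).
  { assert (X : d < eps / (9 * (K + 1))) by lra.
    apply Rmult_lt_compat_r with (r := 9 * (K+1)) in X; [|lra].
    replace (eps / (9 * (K + 1)) * (9 * (K + 1))) with eps in X by (field; lra). lra. }
  pose proof (part3 T (Pn n) P HT (HPn n) HP ltac:(fold d; lra)) as Hb. fold K d in Hb.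
  pose proof (hausdorff_nonneg
     (closure (numrange_on (range (Pn n)) (fun x => Pn n (T (Pn n x)))))
     (closure (numrange_on (range P) (fun x => P (T (P x)))))).
  rewrite Rabs_right by lra.
  assert (2 / (1 - d) ^ 2 <= 8).
  { assert (0 < (1 - d) ^ 2) by (apply pow_lt; lra).
    apply Rmult_le_reg_r with ((1-d)^2); auto. unfold Rdiv. rewrite Rmult_assoc, Rinv_l by lra.
    simpl. nra. }
  assert (K * d * (1 + 2 / (1 - d) ^ 2) <= K * d * 9).
  { apply Rmult_le_compat_l. nra. lra. }
  nra.
Qed.

Lemma abs_inv a b : Rabs a <= b -> -b <= a <= b.
Proof. intros. pose proof (Rle_abs a). pose proof (Rle_abs (-a)). rewrite Rabs_Ropp in *. lra. Qed.

Lemma grid_step (M h : R) : 0 < h -> forall k r, -M <= r <= -M + INR k * h ->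
  exists i, (i <= k)%nat /\ Rabs (r - (-M + INR i * h)) <= h.
Proof.
  intros Hh k. induction k as [|k IH]; intros r Hr.
  - exists 0%nat. split; auto. simpl in *. apply Rabs_le. lra.
  - destruct (Rle_dec r (-M + INR k * h)).
    + destruct (IH r ltac:(lra)) as [i [Hi Hd]]. exists i. split; auto.
    + exists (S k). split; auto. rewrite S_INR in *. apply Rabs_le. lra.
Qed.

Lemma grid1 (M h : R) : 0 <= M -> 0 < h -> exists L : nat, forall r, -M <= r <= M ->
  exists i, (i <= L)%nat /\ Rabs (r - (-M + INR i * h)) <= h.
Proof.
  intros HM Hh. destruct (INR_unbounded (2 * M / h)) as [L HL]. exists L.
  intros r Hr. apply grid_step; auto.
  assert (2 * M <= INR L * h).
  { apply Rmult_lt_compat_r with (r := h) in HL; auto.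
    replace (2 * M / h * h) with (2 * M) in HL by (field; lra). lra. }
  lra.
Qed.

Lemma unif (Q : nat -> nat -> Prop) (L : nat) :
  (forall i, (i <= L)%nat -> exists n, forall m, (m >= n)%nat -> Q i m) ->
  exists N, forall i, (i <= L)%nat -> forall m, (m >= N)%nat -> Q i m.
Proof.
  induction L as [|L IH]; intros Hq.
  - destruct (Hq 0%nat (le_n 0)) as [n Hn]. exists n. intros i Hi m Hm.
    assert (i = 0%nat) by lia. subst. auto.
  - destruct IH as [N1 HN1]. { intros i Hi. apply Hq. lia. }
    destruct (Hq (S L) (le_n _)) as [N2 HN2]. exists (Nat.max N1 N2). intros i Hi m Hm.
    destruct (Nat.eq_dec i (S L)). subst. apply HN2. lia. apply HN1. lia. lia.
Qed.

Section P2.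
Context {H : Hilbert} (Hn : nat -> H -> Prop) (Pn : nat -> H -> H)
  (Hcl : forall n, closed_subspace (Hn n))
  (Hmono : forall n x, Hn n x -> Hn (S n) x)
  (Hdense : forall (x : H) eps, eps > 0 -> exists n y, Hn n y /\ vnorm (vsub x y) < eps)
  (Hproj : forall n, orth_proj_onto (Hn n) (Pn n))
  (T : H -> H) (HT : bounded_op T).

Definition Wn n := numrange_on (Hn n) (fun x => Pn n (T x)).

Lemma Pn_fix n x : Hn n x -> Pn n x = x.
Proof. intros Hx. destruct (Hproj n) as [HP Hr]. apply (proj_fix (Pn n)); auto. now apply Hr. Qed.

Lemma Wn_char n a : Wn n a <-> exists x, Hn n x /\ vnorm x = 1 /\ a = inner (T x) x.
Proof.
  unfold Wn, numrange_on. destruct (Hproj n) as [[_ [_ Hs]] _].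
  split; intros [x [Hx [Hu ->]]]; exists x; repeat split; auto;
  rewrite Hs, Pn_fix; auto.
Qed.

Lemma Wn_sub n a : Wn n a -> numrange T a.
Proof. intros Ha. apply Wn_char in Ha as [x [_ [Hu ->]]]. exists x; auto. Qed.

Lemma Hn_mono n m x : (n <= m)%nat -> Hn n x -> Hn m x.
Proof. intros Hle. induction Hle; auto. Qed.

Lemma Wn_mono n m a : (n <= m)%nat -> Wn n a -> Wn m a.
Proof. intros Hle Ha. apply Wn_char in Ha as [x [Hx [Hu ->]]]. apply Wn_char.
  exists x; repeat split; auto. now apply (Hn_mono n). Qed.

Lemma approx w eta : numrange T w -> eta > 0 -> exists n a, Wn n a /\ Cmod (Csub w a) < eta.
Proof.
  intros [x [Hx ->]] He.
  destruct HT as [HTl HTc]. apply bounded_nonneg in HTc as [K [HK HTc]].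
  set (rho := Rmin (1/2) (eta / (4 * K + 1))).
  assert (Hr : 0 < rho). { unfold rho. apply Rmin_glb_lt. lra. apply Rdiv_lt_0_compat; lra. }
  assert (Hr1 : rho <= 1/2) by apply Rmin_l.
  assert (Hr2 : rho <= eta / (4 * K + 1)) by apply Rmin_r.
  clearbody rho.
  destruct (Hdense x rho Hr) as [n [y [Hy Hxy]]].
  pose proof (rev_tri x y). pose proof (rev_tri y x). rewrite vnorm_sub_sym in H1.
  set (s := vnorm y) in *.
  assert (Hs : Rabs (s - 1) <= vnorm (vsub x y)) by (apply Rabs_le; lra).
  assert (Hs0 : 0 < s) by (apply abs_inv in Hs; lra).
  set (y' := vscal (/ s, 0) y).
  assert (Hy' : vnorm y' = 1) by (apply unit_scal, vnorm_ne0; auto).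
  assert (Hny' : Hn n y') by (apply (Hcl n); auto).
  exists n, (inner (T y') y'). split. apply Wn_char. exists y'; auto.
  pose proof (quad_diff T K x y' HTl HTc) as Q1. rewrite Hx, Hy' in Q1.
  pose proof (vnorm_sub_tri x y y'). pose proof (shrink_dist y Hs0) as Sd. fold s y' in Sd.
  pose proof (vnorm_nonneg (vsub x y')).
  assert (vnorm (vsub x y') < 2 * rho) by lra.
  assert (K * (2 * rho) * 2 < eta).
  { assert (X : rho * (4 * K + 1) <= eta).
    { apply Rmult_le_compat_r with (r := 4 * K + 1) in Hr2; [|lra].
      replace (eta / (4 * K + 1) * (4 * K + 1)) with eta in Hr2 by (field; lra). lra. }
    nra. }
  eapply Rle_lt_trans. apply Q1. nra.
Qed.

Lemma part2a z : closure (numrange T) z <->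
  closure (fun w => exists n, numrange_on (Hn n) (fun x => Pn n (T x)) w) z.
Proof.
  split.
  - intros Hz eps He. destruct (Hz (eps/2) ltac:(lra)) as [w [Hw Hd]].
    destruct (approx w (eps/2) Hw ltac:(lra)) as [n [a [Ha Hd2]]].
    exists a. split. exists n. exact Ha.
    pose proof (Cmod_sub_tri z w a). lra.
  - apply closure_mono. intros a [n Ha]. now apply (Wn_sub n).
Qed.

Lemma W_bound : exists K, 0 <= K /\ forall w, numrange T w -> Cmod w <= K.
Proof.
  destruct HT as [_ HTc]. apply bounded_nonneg in HTc as [K [HK HTc]].
  exists K. split; auto. intros w [x [Hx ->]].
  eapply Rle_trans. apply cauchy_schwarz. rewrite Hx. pose proof (HTc x). rewrite Hx in H0. lra.
Qed.

Lemma part2b_eps eps : eps > 0 -> exists N, forall n, (n >= N)%nat ->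
  hausdorff (closure (Wn n)) (closure (numrange T)) <= eps.
Proof.
  intros He. destruct W_bound as [K [HK HW]].
  set (h := eps / 5). assert (Hh : 0 < h) by (unfold h; lra).
  destruct (grid1 K h HK Hh) as [L HL].
  set (g := fun i j : nat => (-K + INR i * h, -K + INR j * h) : Defs.C).
  assert (Hij : forall i, (i <= L)%nat -> exists n, forall m, (m >= n)%nat ->
     forall j, (j <= L)%nat -> (exists w, numrange T w /\ Cmod (Csub w (g i j)) <= 2 * h) ->
       exists a, Wn m a /\ Cmod (Csub (g i j) a) < 3 * h).
  { intros i Hi. destruct (unif (fun j m => (exists w, numrange T w /\ Cmod (Csub w (g i j)) <= 2 * h) ->
       exists a, Wn m a /\ Cmod (Csub (g i j) a) < 3 * h) L) as [N HN].
    2:{ exists N. intros m Hm j Hj. now apply HN. }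
    intros j Hj. destruct (classic (exists w, numrange T w /\ Cmod (Csub w (g i j)) <= 2 * h))
        as [[w [Hw Hd]]|Hno].
      + destruct (approx w h Hw Hh) as [n [a [Ha Hd2]]]. exists n. intros m Hm _.
        exists a. split. apply (Wn_mono n); auto.
        pose proof (Cmod_sub_tri (g i j) w a). rewrite Cmod_sub_sym in Hd. lra.
      + exists 0%nat. intros m _ Hp. contradiction. }
  assert (HL' := HL). clear HL.
  destruct (unif _ L Hij) as [N HN]. exists N. intros n Hnn.
  apply haus_le. unfold h in Hh; lra.
  - intros a Ha. exists a. split. now apply (Wn_sub n). rewrite Cmod_self. lra.
  - intros b Hb. pose proof (HW b Hb) as Hbk.
    pose proof (Cmod_re b). pose proof (Cmod_im b).
    destruct (HL' (fst b)) as [i [Hi Hdi]]. apply abs_inv. lra.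
    destruct (HL' (snd b)) as [j [Hj Hdj]]. apply abs_inv. lra.
    assert (Hbg : Cmod (Csub b (g i j)) <= 2 * h).
    { eapply Rle_trans. apply Cmod_le_comp. destruct b; unfold g, Csub, Cadd, Copp; simpl in *.
      replace (r + - (- K + INR i * h)) with (r - (- K + INR i * h)) by ring.
      replace (r0 + - (- K + INR j * h)) with (r0 - (- K + INR j * h)) by ring. lra. }
    destruct (HN i Hi n Hnn j Hj) as [a [Ha Hd]]. exists b; auto.
    exists a. split; auto. pose proof (Cmod_sub_tri b (g i j) a). unfold h in *. lra.
Qed.

Lemma part2b : Un_cv (fun n => hausdorff (closure (numrange_on (Hn n) (fun x => Pn n (T x))))
                                 (closure (numrange T))) 0.
Proof.
  intros eps He. destruct (part2b_eps (eps/2) ltac:(lra)) as [N HN]. exists N. intros n Hnn.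
  unfold R_dist. rewrite Rminus_0_r. specialize (HN n Hnn). unfold Wn in HN.
  rewrite Rabs_right. lra. apply Rle_ge, hausdorff_nonneg.
Qed.

End P2.

Theorem lemma4p4 : forall H : Hilbert,
  (* (i) *)
  ((exists x : H, x <> vzero) ->
   forall T S : H -> H, bounded_op T -> bounded_op S ->
     hausdorff (closure (numrange T)) (closure (numrange S)) <= opnorm (op_sub T S))
  /\
  (* (ii) *)
  (forall (Hn : nat -> H -> Prop) (Pn : nat -> H -> H),
     (forall n, closed_subspace (Hn n)) ->
     (forall n, nonzero_subspace (Hn n)) ->
     (forall n x, Hn n x -> Hn (S n) x) ->
     (forall (x : H) eps, eps > 0 -> exists n y, Hn n y /\ vnorm (vsub x y) < eps) ->
     (forall n, orth_proj_onto (Hn n) (Pn n)) ->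
     forall T : H -> H, bounded_op T ->
       (forall z, closure (numrange T) z <->
          closure (fun w => exists n, numrange_on (Hn n) (fun x => Pn n (T x)) w) z)
       /\
       Un_cv (fun n => hausdorff (closure (numrange_on (Hn n) (fun x => Pn n (T x))))
                                 (closure (numrange T))) 0)
  /\
  (* (iii) *)
  (forall T P Q : H -> H, bounded_op T ->
     orth_proj P -> orth_proj Q -> nonzero_op P -> nonzero_op Q ->
     opnorm (op_sub P Q) < 1 ->
     hausdorff (closure (numrange_on (range P) (fun x => P (T (P x)))))
               (closure (numrange_on (range Q) (fun x => Q (T (Q x)))))
     <= opnorm T * opnorm (op_sub P Q) * (1 + 2 / (1 - opnorm (op_sub P Q)) ^ 2))
  /\
  (forall (T P : H -> H) (Pn : nat -> H -> H), bounded_op T ->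
     orth_proj P -> nonzero_op P ->
     (forall n, orth_proj (Pn n)) -> (forall n, nonzero_op (Pn n)) ->
     Un_cv (fun n => opnorm (op_sub (Pn n) P)) 0 ->
     Un_cv (fun n => hausdorff
              (closure (numrange_on (range (Pn n)) (fun x => Pn n (T (Pn n x)))))
              (closure (numrange_on (range P) (fun x => P (T (P x)))))) 0).
Proof.
  intros H. split; [|split; [|split]].
  - intros _ T S HT HS. now apply part1.
  - intros Hn Pn Hcl _ Hmono Hdense Hproj T HT. split.
    + intros z. now apply (part2a Hn Pn Hcl Hdense Hproj T HT).
    + now apply (part2b Hn Pn Hcl Hmono Hdense Hproj T HT).
  - intros T P Q HT HP HQ _ _ Hd. now apply part3.
  - intros T P Pn HT HP _ HPn _ Hcv. now apply part3lim.
Qed.
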